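(* For all integers $n,m\ge 2$, the number $a(n,m,\Gamma_{sp})$ of single-peaked $(n,m)$-elections on the candidate set $\{c_1,\ldots,c_m\}$ satisfies $a(n,m,\Gamma_{sp})\le m!\cdot 4^{(m-1)(n-1)}$.
   Context: An $(n,m)$-election $(C,\mathcal{P})$ is a set $C$ of $m$ candidates with an ordered $n$-tuple $\mathcal{P}=(V_1,\ldots,V_n)$ of total orders (votes) on $C$. Given a total order $A$ on $C$ (an axis), a vote $V$ contains a valley with respect to $A$ on candidates $c_1,c_2,c_3$ if $c_2$ lies strictly between $c_1$ and $c_3$ in $A$ and $V$ ranks $c_2$ below both $c_1$ and $c_3$. The election is single-peaked with respect to $A$ if no vote contains a valley with respect to $A$, and single-peaked if it is single-peaked with respect to some total order $A$ on $C$. *)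

(* Defs.v *)
From mathcomp Require Import all_boot all_fingroup.
Set Implicit Arguments. Unset Strict Implicit. Unset Printing Implicit Defensive.

(* A total order on 'I_m is represented by a permutation s : {perm 'I_m},
   where s c is the position of candidate c (position 0 = first/top).
   For a vote V: V c < V d means c is ranked above (preferred to) d.
   For an axis A: A c is the position of c along the axis. *)
Definition vote m := {perm 'I_m}.
Definition axis m := {perm 'I_m}.

Definition election n m := {ffun 'I_n -> vote m}.

Definition between m (A : axis m) (c1 c2 c3 : 'I_m) : bool :=
  ((A c1 < A c2) && (A c2 < A c3)) || ((A c3 < A c2) && (A c2 < A c1)).

Definition has_valley m (A : axis m) (V : vote m) (c1 c2 c3 : 'I_m) : bool :=
  between A c1 c2 c3 && (V c1 < V c2) && (V c3 < V c2).

Definition single_peaked_wrt n m (A : axis m) (P : election n m) : bool :=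
  [forall i, forall c1, forall c2, forall c3, ~~ has_valley A (P i) c1 c2 c3].

Definition single_peaked n m (P : election n m) : bool :=
  [exists A : axis m, single_peaked_wrt A P].

Definition num_single_peaked n m : nat :=
  #|[set P : election n m | single_peaked P]|.

(* Main.v *)
Require Import Defs.
From mathcomp Require Import all_boot all_fingroup.
From mathcomp Require Import zify.

Set Implicit Arguments. Unset Strict Implicit. Unset Printing Implicit Defensive.

Lemma card_bigU (I T : finType) (F : I -> {set T}) :
  #|\bigcup_i F i| <= \sum_i #|F i|.
Proof.
apply: (big_ind2 (fun (S : {set T}) n => #|S| <= n)) => //.
- by rewrite cards0.
- move=> S1 n1 S2 n2 h1 h2.
  by apply: leq_trans (leq_card_setU _ _) _; rewrite /= leq_add.
Qed.

Lemma card_ltset n (a : nat) : a <= n -> #|[set i : 'I_n | i < a]| = a.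
Proof.
move=> ha.
rewrite -sum1_card.
rewrite (eq_bigl (fun i : 'I_n => i < a)); last by move=> i; rewrite inE.
by rewrite (big_ord_narrow ha) sum1_card card_ord.
Qed.

Lemma card_lt n (f : 'I_n -> 'I_n) (finj : injective f) (a : nat) :
  a <= n -> #|[set r | f r < a]| = a.
Proof.
move=> ha.
have -> : [set r | f r < a] = f @^-1: [set i : 'I_n | i < a].
  by apply/setP => r; rewrite !inE.
by rewrite card_preimset // card_ltset.
Qed.

Definition spv m (A : axis m) (V : vote m) :=
  forall c1 c2 c3, ~~ has_valley A V c1 c2 c3.

Lemma mono_left m (A : axis m) (V : vote m) p c d :
  spv A V -> V p = 0 :> nat -> A c < A d -> A d < A p -> V d < V c.
Proof.
move=> sp hp h1 h2.
have := sp c d p; rewrite /has_valley /between h1 h2 /=.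
have dp : d != p by apply/eqP => E; move: h2; rewrite E ltnn.
have cd : c != d by apply/eqP => E; move: h1; rewrite E ltnn.
have : V p < V d.
  rewrite hp lt0n; apply/negP => /eqP E.
  move/eqP: dp; apply; apply: (@perm_inj _ V); apply/val_inj; rewrite /= E hp //.
move=> -> ; rewrite andbT -leqNgt leq_eqVlt => /orP[/eqP E|//].
by move/eqP: cd; case; apply: (@perm_inj _ V); apply/val_inj.
Qed.

Lemma mono_right m (A : axis m) (V : vote m) p c d :
  spv A V -> V p = 0 :> nat -> A p < A d -> A d < A c -> V d < V c.
Proof.
move=> sp hp h1 h2.
have := sp c d p; rewrite /has_valley /between h1 h2 /= orbT.
have dp : d != p by apply/eqP => E; move: h1; rewrite E ltnn.
have cd : c != d by apply/eqP => E; move: h2; rewrite E ltnn.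
have : V p < V d.
  rewrite hp lt0n; apply/negP => /eqP E.
  move/eqP: dp; apply; apply: (@perm_inj _ V); apply/val_inj; rewrite /= E hp //.
move=> -> ; rewrite andbT -leqNgt leq_eqVlt => /orP[/eqP E|//].
by move/eqP: cd; case; apply: (@perm_inj _ V); apply/val_inj.
Qed.

Lemma key m (A : axis m) (V W : vote m) p :
  spv A V -> spv A W -> V p = 0 :> nat -> W p = 0 :> nat ->
  (forall e f, V e = W f -> (A e < A p) = (A f < A p)) -> V = W.
Proof.
move=> spV spW hV hW hR.
suff H : forall k e, (V e < k) = (W e < k).
  apply/permP => e; apply/val_inj/eqP; rewrite eqn_leq.
  have := H (V e).+1 e; rewrite ltnSn ltnS => <-.
  by have := H (W e).+1 e; rewrite ltnSn ltnS => ->.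
elim=> [|k IH] e; first by rewrite !ltn0.
case: (ltnP k m) => hk; last first.
  by rewrite !(leq_trans (ltn_ord _) (leq_trans hk (leqnSn _))).
set r := Ordinal hk.
set x := (V^-1)%g r; set y := (W^-1)%g r.
have Vx : V x = r by rewrite permKV.
have Wy : W y = r by rewrite permKV.
have xy : x = y.
  have hxy := hR x y (etrans Vx (esym Wy)).
  case: (posnP k) => [k0|kpos].
    have -> : x = p by apply: (@perm_inj _ V); apply/val_inj; rewrite /= Vx hV.
    by apply: (@perm_inj _ W); apply/val_inj; rewrite /= Wy hW.
  have xp : A x != A p :> nat.
    apply/eqP => /val_inj/perm_inj E; have := congr1 val Vx; rewrite /= E hV => E0.
    by move: kpos; rewrite -E0.
  have yp : A y != A p :> nat.
    apply/eqP => /val_inj/perm_inj E; have := congr1 val Wy; rewrite /= E hW => E0.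
    by move: kpos; rewrite -E0.
  case: (ltngtP (A x) (A y)) => hc; last first.
  - by apply: (@perm_inj _ A); apply/val_inj.
  -
    case: (ltngtP (A x) (A p)) => hxp; last by move: xp; rewrite hxp eqxx.
    + have hyp : A y < A p by rewrite -hxy.
      have := mono_left spW hW hc hxp; rewrite Wy /= => h.
      by move: (IH x); rewrite h Vx /= ltnn.
    + have hyp : A p < A y.
        case: (ltngtP (A y) (A p)) hxy => // hh; first by rewrite ltnNge (ltnW hxp).
        by move: yp; rewrite hh eqxx.
      have := mono_right spV hV hyp hc; rewrite Vx /= => h.
      by move: (IH y); rewrite h Wy /= ltnn.
  -
    case: (ltngtP (A y) (A p)) => hyp; last by move: yp; rewrite hyp eqxx.
    + have := mono_left spV hV hc hyp; rewrite Vx /= => h.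
      by move: (IH y); rewrite h Wy /= ltnn.
    + have hxp : A p < A x.
        case: (ltngtP (A x) (A p)) hxy => // hh; first by rewrite ltnNge (ltnW hyp).
        by move: xp; rewrite hh eqxx.
      have := mono_right spW hW hxp hc; rewrite Wy /= => h.
      by move: (IH x); rewrite h Vx /= ltnn.
rewrite !ltnS (leq_eqVlt (V e) k) (leq_eqVlt (W e) k) IH; congr (_ || _).
have -> : (V e == k :> nat) = (e == x).
  by rewrite -(inj_eq (@perm_inj _ V)) Vx -(inj_eq val_inj).
have -> : (W e == k :> nat) = (e == y).
  by rewrite -(inj_eq (@perm_inj _ W)) Wy -(inj_eq val_inj).
by rewrite xy.
Qed.

Definition SP m (A : axis m) : {set vote m} :=
  [set V | [forall c1, forall c2, forall c3, ~~ has_valley A V c1 c2 c3]].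

Lemma SP_spv m (A : axis m) V : V \in SP A -> spv A V.
Proof.
by rewrite inE => /forallP H c1 c2 c3; move/forallP: (H c1) => /(_ c2) /forallP.
Qed.

Lemma card_SP m' (A : axis m'.+1) : #|SP A| <= 2 ^ m'.
Proof.
pose f (V : vote m'.+1) : {set 'I_m'.+1} :=
  [set r | A ((V^-1)%g r) < A ((V^-1)%g ord0)].
have cf : forall V, #|f V| = A ((V^-1)%g ord0).
  move=> V; rewrite /f (@card_lt _ (fun r => A ((V^-1)%g r))) //.
    by move=> x y /perm_inj /perm_inj.
  exact: ltnW.
have inj : {in SP A &, injective f}.
  move=> V W hV hW E.
  have Ep : (V^-1)%g ord0 = (W^-1)%g ord0.
    apply: (@perm_inj _ A); apply/val_inj => /=; by rewrite -(cf V) -(cf W) E.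
  apply: (@key _ A V W ((V^-1)%g ord0)).
  - exact: SP_spv.
  - exact: SP_spv.
  - by rewrite permKV.
  - by rewrite Ep permKV.
  - move=> e g VW.
    have h1 : (V e \in f V) = (A e < A ((V^-1)%g ord0)) by rewrite inE permK.
    have h2 : (W g \in f W) = (A g < A ((V^-1)%g ord0)) by rewrite inE permK Ep.
    by rewrite -h1 -h2 E VW.
rewrite -(card_in_imset inj).
have sub : f @: SP A \subset powerset [set~ ord0].
  apply/subsetP => S /imsetP [V _ ->]; rewrite inE.
  apply/subsetP => r; rewrite !inE => h; apply/eqP => E; move: h; rewrite E.
  by rewrite ltnn.
apply: leq_trans (subset_leq_card sub) _.
by rewrite card_powerset cardsC1 card_ord.
Qed.

Theorem mainTheorem5 (n m : nat) (hn : 2 <= n) (hm : 2 <= m) :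
  num_single_peaked n m <= m`! * 4 ^ ((m - 1) * (n - 1)).
Proof.
case: m hm => [//|m'] hm.
pose E (A : axis m'.+1) : {set election n m'.+1} := [set P : election n m'.+1 | [forall i, P i \in SP A]].
have cE : forall A, #|E A| <= 2 ^ (m' * n).
  move=> A.
  have -> : #|E A| = #|(ffun_on (SP A) : {pred {ffun 'I_n -> vote m'.+1}})|.
    apply: eq_card => P; rewrite inE; apply/forallP/ffun_onP => //.
  rewrite card_ffun_on card_ord expnM.
  rewrite leq_exp2r; [exact: card_SP | lia].
have sub : [set P : election n m'.+1 | single_peaked P] \subset \bigcup_A E A.
  apply/subsetP => P; rewrite inE => /existsP [A hA].
  apply/bigcupP; exists A => //; rewrite inE; apply/forallP => i.
  rewrite inE; apply/forallP => c1; apply/forallP => c2; apply/forallP => c3.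
  by move/forallP: hA => /(_ i) /forallP /(_ c1) /forallP /(_ c2) /forallP /(_ c3).
rewrite /num_single_peaked.
apply: leq_trans (subset_leq_card sub) _.
have H := card_bigU E. apply: (leq_trans H).
apply: (leq_trans (n := \sum_A 2 ^ (m' * n))); first by apply: leq_sum => A _; exact: cE.
rewrite sum_nat_const card_Sn leq_mul2l; apply/orP; right.
have -> : 4 = 2 ^ 2 by [].
rewrite -expnM leq_exp2l // subSS subn0 mulnA (mulnC 2) -mulnA leq_mul2l; apply/orP; right; lia.
Qed.
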